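(* Let $(R,\mathfrak{m})$ be a commutative Artinian local ring with identity and $\mathfrak{m}\neq0$. If $f\in R[x]$ is a regular polynomial of degree $n$, then $L(f)\subseteq\{1,2,\dots,n\}$.
   Context: A polynomial is regular if not all of its coefficients lie in $\mathfrak{m}$. A nonunit polynomial is irreducible if in any factorization into two polynomials one factor is a unit of $R[x]$ (a polynomial $a_0+\dots+a_dx^d$ is a unit iff $a_0$ is a unit and $a_i\in\mathfrak{m}$ for $i>0$). A positive integer $k$ is a length of $f$ if $f$ is a product of $k$ irreducible polynomials of $R[x]$; $L(f)$ denotes the set of lengths of $f$. *)

(* Defs.v *)
From HB Require Import structures.
From mathcomp Require Import all_boot all_order all_algebra.
Set Implicit Arguments. Unset Strict Implicit. Unset Printing Implicit Defensive.
Import GRing.Theory.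
Local Open Scope ring_scope.

Definition is_ideal (R : comNzRingType) (I : R -> Prop) : Prop :=
  I 0 /\ (forall x y, I x -> I y -> I (x + y)) /\ (forall r x, I x -> I (r * x)).

Definition proper_ideal (R : comNzRingType) (I : R -> Prop) : Prop :=
  is_ideal I /\ ~ I 1.

Definition local_ring (R : comNzRingType) (m : R -> Prop) : Prop :=
  proper_ideal m /\ (forall I, proper_ideal I -> forall x, I x -> m x).

Definition artinian (R : comNzRingType) : Prop :=
  forall I : nat -> R -> Prop,
    (forall n, is_ideal (I n)) ->
    (forall n x, I n.+1 x -> I n x) ->
    exists N : nat, forall n, (N <= n)%N -> forall x, I n x <-> I N x.

Definition regular_poly (R : comNzRingType) (m : R -> Prop) (f : {poly R}) : Prop :=
  exists i : nat, ~ m f`_i.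

Definition poly_unit (R : comNzRingType) (p : {poly R}) : Prop :=
  exists q : {poly R}, p * q = 1.

Definition poly_irreducible (R : comNzRingType) (f : {poly R}) : Prop :=
  ~ poly_unit f /\
  forall g h : {poly R}, f = g * h -> poly_unit g \/ poly_unit h.

Definition is_length (R : comNzRingType) (f : {poly R}) (k : nat) : Prop :=
  (0 < k)%N /\
  exists s : seq {poly R},
    size s = k /\ (forall g, g \in s -> poly_irreducible g) /\
    \prod_(g <- s) g = f.

(* Main.v *)
Require Import Defs.
From HB Require Import structures.
From mathcomp Require Import all_boot all_order all_algebra.
From Stdlib Require Import ClassicalEpsilon.
Import GRing.Theory.
Local Open Scope ring_scope.
Set Implicit Arguments. Unset Strict Implicit.

Lemma m0 (R : comNzRingType) (m : R -> Prop) (Hloc : local_ring m) : m 0.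
Proof. by case: Hloc => [[[]]]. Qed.

Lemma mD (R : comNzRingType) (m : R -> Prop) (Hloc : local_ring m) x y :
  m x -> m y -> m (x + y).
Proof. by case: Hloc => [[[_ []]]] => H _ _ _; apply: H. Qed.

Lemma mM (R : comNzRingType) (m : R -> Prop) (Hloc : local_ring m) r x :
  m x -> m (r * x).
Proof. by case: Hloc => [[[_ []]]] => _ H _ _; apply: H. Qed.

Lemma mMr (R : comNzRingType) (m : R -> Prop) (Hloc : local_ring m) r x :
  m x -> m (x * r).
Proof. by rewrite mulrC; apply: mM. Qed.

Lemma mN (R : comNzRingType) (m : R -> Prop) (Hloc : local_ring m) x :
  m x -> m (- x).
Proof. by move=> Hx; rewrite -mulN1r; apply: mM. Qed.

Lemma m1 (R : comNzRingType) (m : R -> Prop) (Hloc : local_ring m) : ~ m 1.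
Proof. by case: Hloc => [[]]. Qed.

Lemma m_sum (R : comNzRingType) (m : R -> Prop) (Hloc : local_ring m)
  (I : Type) (r : seq I) (P : pred I) (F : I -> R) :
  (forall i, P i -> m (F i)) -> m (\sum_(i <- r | P i) F i).
Proof.
move=> H; apply: (big_ind (fun x => m x)) => //; first exact: m0.
by move=> x y; apply: mD.
Qed.

Lemma notm_unit (R : comNzRingType) (m : R -> Prop) (Hloc : local_ring m) c :
  ~ m c -> exists d, c * d = 1.
Proof.
move=> Hc; apply: NNPP => Hn; apply: Hc.
case: Hloc => _ H; apply: (H (fun y => exists r, y = c * r)); last by exists 1; rewrite mulr1.
split; last by case=> r E; apply: Hn; exists r.
split; first by exists 0; rewrite mulr0.
split; first by move=> x y [a ->] [b ->]; exists (a + b); rewrite mulrDr.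
by move=> r x [a ->]; exists (r * a); rewrite mulrCA.
Qed.

Lemma m_prime (R : comNzRingType) (m : R -> Prop) (Hloc : local_ring m) x y :
  ~ m x -> ~ m y -> ~ m (x * y).
Proof.
move=> /(notm_unit Hloc) [d Hd] /(notm_unit Hloc) [e He] Hxy.
apply: (m1 Hloc); have -> : 1 = (x * y) * (d * e).
  by rewrite mulrACA Hd He mulr1.
exact: mMr.
Qed.

Lemma notm_add (R : comNzRingType) (m : R -> Prop) (Hloc : local_ring m) x y :
  ~ m x -> m y -> ~ m (x + y).
Proof.
move=> Hx Hy Hs; apply: Hx; have -> : x = (x + y) + - y by rewrite addrK.
by apply: mD => //; apply: mN.
Qed.

Lemma m_nil (R : comNzRingType) (m : R -> Prop) (Hloc : local_ring m)
  (Hart : artinian R) x : m x -> exists N, x ^+ N = 0.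
Proof.
move=> Hx.
have Hid : forall n, is_ideal (fun y => exists r, y = x ^+ n * r).
  move=> n; split; first by exists 0; rewrite mulr0.
  split; first by move=> a b [u ->] [v ->]; exists (u + v); rewrite mulrDr.
  by move=> r a [u ->]; exists (r * u); rewrite mulrCA.
have Hdec : forall n y, (exists r, y = x ^+ n.+1 * r) -> exists r, y = x ^+ n * r.
  by move=> n y [r ->]; exists (x * r); rewrite exprS mulrCA mulrA.
have [N HN] := Hart _ Hid Hdec.
have [r Hr] : exists r, x ^+ N = x ^+ N.+1 * r.
  by apply/(HN N.+1 (leqnSn N)); exists 1; rewrite mulr1.
exists N.
have Hu : ~ m (1 - x * r).
  move=> H; apply: (m1 Hloc); have -> : 1 = (1 - x * r) + x * r by rewrite subrK.
  by apply: mD => //; apply: mMr.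
have [d Hd] := notm_unit Hloc Hu.
have E : x ^+ N * (1 - x * r) = 0.
  by rewrite mulrBr mulr1 mulrA -exprSr -Hr subrr.
by rewrite -[x ^+ N]mulr1 -Hd mulrA E mul0r.
Qed.

From mathcomp Require Import zify.

Lemma nil_ge (A : comNzRingType) (x : A) a j : x ^+ a = 0 -> (a <= j)%N -> x ^+ j = 0.
Proof. by move=> H le; rewrite -(subnKC le) exprD H mul0r. Qed.

Lemma nil_add (A : comNzRingType) (x y : A) a b :
  x ^+ a = 0 -> y ^+ b = 0 -> (x + y) ^+ (a + b) = 0.
Proof.
move=> Hx Hy; rewrite exprDn big1 // => i _.
case: (leqP b i) => h; first by rewrite (nil_ge Hy h) mulr0 mul0rn.
by rewrite (nil_ge (j := (a + b - i)%N) Hx) ?mul0r ?mul0rn //; lia.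
Qed.

Lemma nil_mul (A : comNzRingType) (x y : A) a : x ^+ a = 0 -> (y * x) ^+ a = 0.
Proof. by move=> H; rewrite exprMn H mulr0. Qed.

Lemma poly_nil (R : comNzRingType) (m : R -> Prop) (Hloc : local_ring m)
  (Hart : artinian R) (p : {poly R}) : (forall i, m p`_i) -> exists N, p ^+ N = 0.
Proof.
move=> H; rewrite -[p]coefK poly_def.
apply: (big_ind (fun q => exists N, q ^+ N = 0)).
- by exists 1%N; rewrite expr1.
- by move=> x y [a Ha] [b Hb]; exists (a + b)%N; apply: nil_add.
- move=> i _; have [N HN] := m_nil Hloc Hart (H i).
  exists N; rewrite -mul_polyC mulrC; apply: nil_mul.
  by rewrite -rmorphXn HN.
Qed.

Lemma one_sub_unit (A : comNzRingType) (q : A) N :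
  q ^+ N = 0 -> exists s, (1 - q) * s = 1.
Proof.
move=> H; exists (\sum_(i < N) q ^+ i).
have := subrX1 q N; rewrite H sub0r => E.
by rewrite -opprB mulNr -E opprK.
Qed.

Definition top (R : comNzRingType) (m : R -> Prop) (g : {poly R}) a :=
  ~ m g`_a /\ forall i, (a < i)%N -> m g`_i.

Lemma top0_unit (R : comNzRingType) (m : R -> Prop) (Hloc : local_ring m)
  (Hart : artinian R) (g : {poly R}) : top m g 0 -> Defs.poly_unit g.
Proof.
move=> [H0 Hi]; have [d Hd] := notm_unit Hloc H0.
set q := 1 - g * d%:P.
have Hq : forall i, m q`_i.
  move=> i; rewrite /q coefB coef1 coefMC; case: i => [|i] /=.
    by rewrite Hd subrr; apply: m0.
  by rewrite sub0r; apply: mN => //; apply: mMr => //; apply: Hi.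
have [N HN] := poly_nil Hloc Hart Hq.
have [s Hs] := one_sub_unit HN.
have E : 1 - q = g * d%:P by rewrite /q opprB addrC subrK.
by exists (d%:P * s); rewrite mulrA -E.
Qed.

Definition mb (R : Type) (m : R -> Prop) (x : R) : bool :=
  if excluded_middle_informative (m x) then true else false.

Lemma mbP (R : Type) (m : R -> Prop) x : mb m x = true <-> m x.
Proof. by rewrite /mb; case: excluded_middle_informative. Qed.

Lemma top_exists (R : comNzRingType) (m : R -> Prop) (Hloc : local_ring m)
  (g : {poly R}) : regular_poly m g -> exists a, top m g a.
Proof.
move=> Hreg.
pose P : pred nat := fun i => ~~ mb m g`_i.
have exP : exists i, P i.
  case: Hreg => i Hi; exists i; rewrite /P; apply/negP => /mbP; exact: Hi.
have ubP : forall i, P i -> (i <= size g)%N.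
  move=> i Pi; rewrite leqNgt; apply/negP => h; move: Pi.
  rewrite /P nth_default ?(ltnW h) //; apply/negP/negPn/mbP; exact: m0.
case: (ex_maxnP exP ubP) => i Pi Hmax; exists i; split.
  by move=> /mbP H; move: Pi; rewrite /P H.
move=> j hj; apply: NNPP => Hn.
have Pj : P j by rewrite /P; apply/negP => /mbP.
by have := Hmax j Pj; rewrite leqNgt hj.
Qed.

Lemma top_mul (R : comNzRingType) (m : R -> Prop) (Hloc : local_ring m)
  (g h : {poly R}) a b : top m g a -> top m h b -> top m (g * h) (a + b).
Proof.
move=> [Ga Gi] [Hb Hi]; split.
  have Ha : (a < (a + b).+1)%N by rewrite ltnS leq_addr.
  rewrite coefM (bigD1 (Ordinal Ha)) //= addKn.
  apply: notm_add => //; first exact: m_prime.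
  apply: m_sum => // j hj.
  case: (ltngtP a j) => hl.
  - by apply: mMr => //; apply: Gi.
  - by apply: mM => //; apply: Hi; lia.
  - exfalso; move/eqP: hj; apply; apply: val_inj; exact: esym hl.
move=> k hk; rewrite coefM; apply: m_sum => // j _.
case: (ltnP a j) => hl.
- by apply: mMr => //; apply: Gi.
- by apply: mM => //; apply: Hi; lia.
Qed.

Lemma top_le (R : comNzRingType) (m : R -> Prop) (Hloc : local_ring m)
  (g : {poly R}) a : top m g a -> (a <= (size g).-1)%N.
Proof.
move=> [Ga _]; have : (a < size g)%N.
  rewrite ltnNge; apply/negP => h; apply: Ga; rewrite nth_default //; exact: m0.
by move=> h; lia.
Qed.

Lemma allm_mul (R : comNzRingType) (m : R -> Prop) (Hloc : local_ring m)
  (g h : {poly R}) : (forall i, m g`_i) -> forall i, m (g * h)`_i.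
Proof. by move=> H i; rewrite coefM; apply: m_sum => // j _; apply: mMr. Qed.

Lemma prod_top (R : comNzRingType) (m : R -> Prop) (Hloc : local_ring m)
  (Hart : artinian R) (s : seq {poly R}) :
  (forall g, g \in s -> poly_irreducible g) ->
  regular_poly m (\prod_(g <- s) g) ->
  exists a, top m (\prod_(g <- s) g) a /\ (size s <= a)%N.
Proof.
elim: s => [|g s IH] Hirr Hreg.
  exists 0%N; rewrite big_nil; split => //; split.
    by rewrite coef1 /=; apply: m1.
  by move=> [|i] hi //; rewrite coef1 /=; apply: m0.
rewrite big_cons in Hreg *.
set P := \prod_(j <- s) j in Hreg *.
have notreg : forall u : {poly R}, ~ regular_poly m u -> forall i, m u`_i.
  by move=> u Hn i; apply: NNPP => h; apply: Hn; exists i.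
have Rg : regular_poly m g.
  apply: NNPP => Hn; case: Hreg => i; apply; exact: allm_mul (notreg _ Hn) i.
have RP : regular_poly m P.
  apply: NNPP => Hn; case: Hreg => i; apply; rewrite mulrC; exact: allm_mul (notreg _ Hn) i.
have Hirr' : forall x, x \in s -> poly_irreducible x.
  by move=> x hx; apply: Hirr; rewrite inE hx orbT.
have [a [Ha Hs]] := IH Hirr' RP.
have [b Hb] := top_exists Hloc Rg.
have b0 : b <> 0%N.
  move=> E; rewrite E in Hb; have := (Hirr g (mem_head g s)).1; apply.
  exact: top0_unit Hloc Hart g Hb.
exists (b + a)%N; split; first exact: top_mul.
by rewrite /=; lia.
Qed.

Unset Implicit Arguments.
Theorem lemma4p3 (R : comNzRingType) (m : R -> Prop)
  (Hloc : local_ring m) (Hart : artinian R) (Hm0 : exists a : R, m a /\ a <> 0)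
  (f : {poly R}) (n : nat) (Hreg : regular_poly m f) (Hdeg : (size f).-1 = n) :
  forall k : nat, is_length f k -> (1 <= k <= n)%N.
Proof.
move=> k [Hk [s [Hs [Hirr Hprod]]]].
rewrite -Hprod in Hreg.
have [a [Ha Hsa]] := prod_top Hloc Hart Hirr Hreg.
have := top_le Hloc Ha; rewrite Hprod Hdeg => hle; rewrite Hs in Hsa.
by apply/andP; split => //; lia.
Qed.
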